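(* Let $E$ be an arbitrary set and $\mathcal L\subseteq\{+,-,0\}^E$. Then $\mathcal L$ satisfies the four axioms (C) $\mathcal L\circ\mathcal L\subseteq\mathcal L$; (FS) $\mathcal L\circ(-\mathcal L)\subseteq\mathcal L$; (SE$^=$) for all $X,Y\in\mathcal L$ with $\underline X=\underline Y$ and all $e\in S(X,Y)$, $I^=_e(X,Y;\mathcal L)\neq\emptyset$; (P$^=_{\mathrm{asym}}$) $\mathcal P^=_{\mathrm{asym}}(\mathcal L)\circ\mathcal L\subseteq\mathcal L$, if and only if $\mathcal L$ satisfies the three axioms (FS) $\mathcal L\circ(-\mathcal L)\subseteq\mathcal L$; (SE) for all $X,Y\in\mathcal L$ and all $e\in S(X,Y)$, $I_e(X,Y;\mathcal L)\neq\emptyset$; (P) $\mathcal P(\mathcal L)\circ\mathcal L\subseteq\mathcal L$.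
   Context: A sign vector on a set $E$ is an element of $\{+,-,0\}^E$; $-X$ is defined by $(-X)(e)=-X(e)$. The support of $X$ is $\underline X=\{e\in E: X(e)\neq0\}$. The separator of $X,Y$ is $S(X,Y)=\{e\in E: X(e)\neq0\neq Y(e),\ X(e)\neq Y(e)\}$. The composition $X\circ Y$ is given by $(X\circ Y)(e)=X(e)$ if $X(e)\neq0$ and $(X\circ Y)(e)=Y(e)$ otherwise. The sign vector $X\oplus Y$ is $0$ on $S(X,Y)$ and equals $X\circ Y$ elsewhere. For sets $\mathcal A,\mathcal B$ of sign vectors, $\mathcal A\circ\mathcal B=\{X\circ Y:X\in\mathcal A,Y\in\mathcal B\}$ and $-\mathcal A=\{-X:X\in\mathcal A\}$. For $\mathcal L\subseteq\{+,-,0\}^E$, sign vectors $X,Y$ and $e\in E$ put $I_e(X,Y;\mathcal L)=\{Z\in\mathcal L: Z(e)=0,\ Z(f)=(X\circ Y)(f)\ \forall f\notin S(X,Y)\}$, $I(X,Y;\mathcal L)=\bigcup_{e\in S(X,Y)}I_e(X,Y;\mathcal L)$, $I^=_e(X,Y;\mathcal L)=\{Z\in\mathcal L: Z(e)=0,\ Z(f)=X(f)\ \forall f\notin S(X,Y)\}$, $I^=(X,Y;\mathcal L)=\bigcup_{e\in S(X,Y)}I^=_e(X,Y;\mathcal L)$, $\mathrm{Asym}(\mathcal L)=\{X\in\mathcal L:-X\notin\mathcal L\}$, $\mathcal P^=_{\mathrm{asym}}(\mathcal L)=\{X\oplus(-Y): X,Y\in\mathrm{Asym}(\mathcal L),\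 \underline X=\underline Y,\ I^=(X,-Y;\mathcal L)=I^=(-X,Y;\mathcal L)=\emptyset\}$, $\mathcal P(\mathcal L)=\{X\oplus(-Y): X,Y\in\mathcal L,\ I(X,-Y;\mathcal L)=I(-X,Y;\mathcal L)=\emptyset\}$. *)

(* Defs.v *)
Inductive sign : Type := Pl | Mi | Ze.

Definition sv (E : Type) := E -> sign.

Definition sneg (s : sign) : sign :=
  match s with Pl => Mi | Mi => Pl | Ze => Ze end.

Definition negv {E : Type} (X : sv E) : sv E := fun e => sneg (X e).

Definition comp {E : Type} (X Y : sv E) : sv E :=
  fun e => match X e with Ze => Y e | s => s end.

Definition in_supp {E : Type} (X : sv E) (e : E) : Prop := X e <> Ze.

Definition same_supp {E : Type} (X Y : sv E) : Prop :=
  forall e, in_supp X e <-> in_supp Y e.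

Definition sep {E : Type} (X Y : sv E) (e : E) : Prop :=
  X e <> Ze /\ Y e <> Ze /\ X e <> Y e.

Definition sep_dec (a b : sign) : bool :=
  match a, b with
  | Pl, Mi | Mi, Pl => true
  | _, _ => false
  end.

Definition oplus {E : Type} (X Y : sv E) : sv E :=
  fun e => if sep_dec (X e) (Y e) then Ze else comp X Y e.

Definition SVset (E : Type) := sv E -> Prop.

Definition In_Ie {E : Type} (L : SVset E) (X Y : sv E) (e : E) (Z : sv E) : Prop :=
  L Z /\ Z e = Ze /\ forall f, ~ sep X Y f -> Z f = comp X Y f.

Definition In_I {E : Type} (L : SVset E) (X Y : sv E) (Z : sv E) : Prop :=
  exists e, sep X Y e /\ In_Ie L X Y e Z.

Definition In_Ie_eq {E : Type} (L : SVset E) (X Y : sv E) (e : E) (Z : sv E) : Prop :=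
  L Z /\ Z e = Ze /\ forall f, ~ sep X Y f -> Z f = X f.

Definition In_I_eq {E : Type} (L : SVset E) (X Y : sv E) (Z : sv E) : Prop :=
  exists e, sep X Y e /\ In_Ie_eq L X Y e Z.

Definition Asym {E : Type} (L : SVset E) : SVset E :=
  fun X => L X /\ ~ L (negv X).

Definition P_asym_eq {E : Type} (L : SVset E) : SVset E :=
  fun W => exists X Y, Asym L X /\ Asym L Y /\ same_supp X Y /\
    (forall Z, ~ In_I_eq L X (negv Y) Z) /\
    (forall Z, ~ In_I_eq L (negv X) Y Z) /\
    W = oplus X (negv Y).

Definition P_set {E : Type} (L : SVset E) : SVset E :=
  fun W => exists X Y, L X /\ L Y /\
    (forall Z, ~ In_I L X (negv Y) Z) /\
    (forall Z, ~ In_I L (negv X) Y Z) /\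
    W = oplus X (negv Y).

Definition ax_C {E : Type} (L : SVset E) : Prop :=
  forall X Y, L X -> L Y -> L (comp X Y).

Definition ax_FS {E : Type} (L : SVset E) : Prop :=
  forall X Y, L X -> L Y -> L (comp X (negv Y)).

Definition ax_SE_eq {E : Type} (L : SVset E) : Prop :=
  forall X Y, L X -> L Y -> same_supp X Y ->
    forall e, sep X Y e -> exists Z, In_Ie_eq L X Y e Z.

Definition ax_SE {E : Type} (L : SVset E) : Prop :=
  forall X Y, L X -> L Y ->
    forall e, sep X Y e -> exists Z, In_Ie L X Y e Z.

Definition ax_P_asym_eq {E : Type} (L : SVset E) : Prop :=
  forall W Z, P_asym_eq L W -> L Z -> L (comp W Z).

Definition ax_P {E : Type} (L : SVset E) : Prop :=
  forall W Z, P_set L W -> L Z -> L (comp W Z).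

(* Main.v *)
Require Import Defs.
From Stdlib Require Import Classical Setoid FunctionalExtensionality.

Ltac sdes := repeat match goal with
 | |- context [match ?t with Pl => _ | Mi => _ | Ze => _ end] => destruct t eqn:?
 | H: context [match ?t with Pl => _ | Mi => _ | Ze => _ end] |- _ => destruct t eqn:?
 end.

Lemma sep_dec_iff (a b : sign) : (a <> Ze /\ b <> Ze /\ a <> b) <-> sep_dec a b = true.
Proof. destruct a, b; simpl; intuition congruence. Qed.

Ltac isSign t := let T := type of t in constr_eq T sign.
Ltac crush :=
   unfold sep, same_supp in *; repeat rewrite sep_dec_iff in *;
   unfold oplus, comp, negv, sneg, in_supp in *; cbv beta;
   repeat match goal with |- context [?X ?f] => is_var X; is_var f; isSign (X f);
      let a := fresh "a" in generalize (X f) as a; intro a end;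
   repeat match goal with a : sign |- _ => destruct a end; simpl; intuition congruence.

Section S.
Context {E : Type}.
Implicit Types X Y : sv E.

Lemma dir1 (L : SVset E) : ax_C L -> ax_FS L -> ax_SE_eq L -> ax_P_asym_eq L ->
  ax_SE L /\ ax_P L.
Proof.
intros HC HFS HSE HP. split.
- intros X Y LX LY e Se.
  destruct (HSE (comp X Y) (comp Y X) (HC _ _ LX LY) (HC _ _ LY LX)) with (e := e)
    as [Z [LZ [Ze HZ]]].
  + intro f. unfold in_supp, comp. destruct (X f), (Y f); intuition congruence.
  + revert Se. crush.
  + exists Z. split; [exact LZ| split; [exact Ze|]].
    intros f nf. apply HZ. intro s. apply nf. revert s. crush.
- intros W Z0 [X [Y [LX [LY [nI1 [nI2 ->]]]]]] LZ0.
  destruct (classic (exists e, sep X (negv Y) e)) as [[e Se]|nS].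
  + set (X' := comp X (negv Y)). set (Y' := comp Y (negv X)).
    assert (LX' : L X') by (apply HFS; auto).
    assert (LY' : L Y') by (apply HFS; auto).
    assert (ss : same_supp X' Y') by
      (intro f; subst X' Y'; unfold in_supp, comp, negv, sneg; destruct (X f), (Y f); intuition congruence).
    assert (nX : ~ L (negv X')).
    { intro H. destruct (HSE Y' (negv X') LY' H) with (e := e) as [Z1 [LZ1 [Ze1 HZ1]]].
      - intro f; subst X' Y'; unfold in_supp, comp, negv, sneg; destruct (X f), (Y f); intuition congruence.
      - revert Se; subst X' Y'; crush.
      - apply (nI2 Z1). exists e. split; [revert Se; crush|].
        split; [exact LZ1| split; [exact Ze1|]].
        intros f nf. rewrite HZ1.
        + revert nf; subst X' Y'; crush.
        + revert nf; subst X' Y'; crush. }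
    assert (nY : ~ L (negv Y')).
    { intro H. destruct (HSE X' (negv Y') LX' H) with (e := e) as [Z1 [LZ1 [Ze1 HZ1]]].
      - intro f; subst X' Y'; unfold in_supp, comp, negv, sneg; destruct (X f), (Y f); intuition congruence.
      - revert Se; subst X' Y'; crush.
      - apply (nI1 Z1). exists e. split; [exact Se|].
        split; [exact LZ1| split; [exact Ze1|]].
        intros f nf. rewrite HZ1.
        + revert nf; subst X' Y'; crush.
        + revert nf; subst X' Y'; crush. }
    assert (eqW : oplus X (negv Y) = oplus X' (negv Y')).
    { apply functional_extensionality; intro f; subst X' Y'. crush. }
    rewrite eqW. apply HP; [|exact LZ0].
    exists X', Y'. split; [split; auto|]. split; [split; auto|]. split; [exact ss|]. split; [|split; [|reflexivity]].
    * intros Z [e' [s' [LZ [Ze HZ]]]]. apply (nI1 Z). exists e'.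
      split; [revert s'; subst X' Y'; crush|].
      split; [exact LZ| split; [exact Ze|]].
      intros f nf. rewrite HZ. { subst X'; reflexivity. } revert nf; subst X' Y'; crush.
    * intros Z [e' [s' [LZ [Ze HZ]]]]. apply (nI2 Z). exists e'.
      split; [revert s'; subst X' Y'; crush|].
      split; [exact LZ| split; [exact Ze|]].
      intros f nf. rewrite HZ. { subst X'; crush. } revert nf; subst X' Y'; crush.
  + assert (eqW : oplus X (negv Y) = comp X (negv Y)).
    { apply functional_extensionality; intro f.
      assert (nf : ~ sep X (negv Y) f) by (intro s; apply nS; eauto).
      revert nf; crush. }
    rewrite eqW. apply HC; auto.
Qed.

Lemma dir2 (L : SVset E) : ax_FS L -> ax_SE L -> ax_P L ->
  ax_C L /\ ax_SE_eq L /\ ax_P_asym_eq L.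
Proof.
intros HFS HSE HP. split; [|split].
- intros X Y LX LY.
  assert (eq : comp X Y = comp X (negv (comp X (negv Y)))).
  { apply functional_extensionality; intro f; crush. }
  rewrite eq. apply HFS; auto.
- intros X Y LX LY ss e Se.
  destruct (HSE X Y LX LY e Se) as [Z [LZ [Ze HZ]]].
  exists Z. split; [exact LZ| split; [exact Ze|]].
  intros f nf. rewrite (HZ f nf). generalize (ss f). revert nf. crush.
- intros W Z0 [X [Y [[LX _] [[LY _] [ss [nI1 [nI2 ->]]]]]]] LZ0.
  apply HP; [|exact LZ0]. exists X, Y. repeat split; auto.
  + intros Z [e [s [LZ [Ze HZ]]]]. apply (nI1 Z). exists e. split; [exact s|].
    split; [exact LZ| split; [exact Ze|]].
    intros f nf. rewrite (HZ f nf). generalize (ss f). revert nf. crush.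
  + intros Z [e [s [LZ [Ze HZ]]]]. apply (nI2 Z). exists e. split; [exact s|].
    split; [exact LZ| split; [exact Ze|]].
    intros f nf. rewrite (HZ f nf). generalize (ss f). revert nf. crush.
Qed.
End S.

Theorem proposition2p2 (E : Type) (L : SVset E) :
  (ax_C L /\ ax_FS L /\ ax_SE_eq L /\ ax_P_asym_eq L) <->
  (ax_FS L /\ ax_SE L /\ ax_P L).
Proof.
split.
- intros [HC [HFS [HSE HP]]]. destruct (dir1 L HC HFS HSE HP). auto.
- intros [HFS [HSE HP]]. destruct (dir2 L HFS HSE HP) as [? [? ?]]. auto.
Qed.
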